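(* Let $q$ be a prime power and $r\ge1$ an integer, and let $\mathcal{F}(q,r)$ be the largest integer $n$ that is not the cardinality of a $q^r$-divisible set of points in $\mathrm{PG}(v-1,q)$ for any $v\ge1$. Then $\mathcal{F}(q,r)$ is well defined and $$\mathcal{F}(q,r)\le \frac{q^{r+1}-1}{q-1}\cdot q^{r+1}-\frac{q^{r+1}-1}{q-1}-q^{r+1}=q^{2r+1}+q^{2r}+\dots+q^{r+2}-q^r-q^{r-1}-\dots-1.$$ In other words, every integer $n$ larger than this bound is the cardinality of some $q^r$-divisible set of points in some projective space over $\mathbb{F}_q$.
   Context: $\mathrm{PG}(v-1,q)$ is the set of $1$-dimensional subspaces (points) of $\mathbb{F}_q^v$; hyperplanes are $(v-1)$-dimensional subspaces. A set $\mathcal{C}$ of points is $\Delta$-divisible if there is an integer $u$ with $|\mathcal{C}\cap H|\equiv u\pmod{\Delta}$ for every hyperplane $H$, where $\mathcal{C}\cap H$ is the set of points of $\mathcal{C}$ contained in $H$. *)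

(* Defs.v *)
From mathcomp Require Import all_boot all_order all_algebra.
Set Implicit Arguments. Unset Strict Implicit. Unset Printing Implicit Defensive.
Import GRing.Theory.
Local Open Scope ring_scope.

(* PG(v-1, F): points are the 1-dimensional subspaces of F^v = 'rV[F]_v,
   hyperplanes are the (v-1)-dimensional subspaces. *)
Definition is_point (F : finFieldType) (v : nat) (P : {vspace 'rV[F]_v}) : bool :=
  \dim P == 1%N.

Definition is_hyperplane (F : finFieldType) (v : nat) (H : {vspace 'rV[F]_v}) : bool :=
  \dim H == v.-1.

Definition point_set (F : finFieldType) (v : nat) (C : seq {vspace 'rV[F]_v}) : Prop :=
  uniq C /\ all (@is_point F v) C.

Definition card_cap (F : finFieldType) (v : nat) (C : seq {vspace 'rV[F]_v})
  (H : {vspace 'rV[F]_v}) : nat :=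
  count (fun P => (P <= H)%VS) C.

Definition divisible (F : finFieldType) (v : nat) (Delta : nat)
  (C : seq {vspace 'rV[F]_v}) : Prop :=
  exists u : int, forall H : {vspace 'rV[F]_v}, is_hyperplane H ->
    ((card_cap C H)%:Z = u %[mod Delta%:Z])%Z.

Definition realizable (F : finFieldType) (Delta n : nat) : Prop :=
  exists v : nat, (1 <= v)%N /\
    exists C : seq {vspace 'rV[F]_v},
      point_set C /\ size C = n /\ divisible Delta C.

(* Main.v *)
Require Import Defs.
From mathcomp Require Import all_boot all_order all_algebra finfield zify ring.
Import GRing.Theory Num.Theory.
Local Open Scope ring_scope.

Section Gen.
Variables (F : finFieldType) (v : nat).
Local Notation V := 'rV[F]_v.
Local Notation q := #|F|.

Definition dmx (J : {set 'I_v}) : 'M[F]_v := diag_mx (\row_j (j \notin J)%:R).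
Definition cs (J : {set 'I_v}) : {vspace V} := lker (linfun (mulmxr (dmx J))).

Lemma mem_cs J z : (z \in cs J) = [forall j, (j \notin J) ==> (z 0 j == 0)].
Proof.
rewrite memv_ker lfunE /= /dmx mul_mx_diag.
apply/eqP/forallP => [/rowP H j | H].
  apply/implyP => hj; have := H j; rewrite !mxE hj mulr1 => ->; by [].
apply/rowP => j; rewrite !mxE; case: (boolP (j \in J)) => hj; first by rewrite mulr0.
by rewrite mulr1; have /implyP := H j; move/(_ hj)/eqP.
Qed.

Lemma card_cs J : #|cs J| = (q ^ #|J|)%N.
Proof.
pose g (f : {ffun 'I_v -> F}) : V := \row_j f j.
have ginj : injective g.
  by move=> f1 f2 /rowP H; apply/ffunP => j; have := H j; rewrite !mxE.
have -> : #|cs J| = #|[set g f | f in pffun_on (0 : F) J predT]|.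
  apply: eq_card => z; rewrite mem_cs.
  apply/forallP/imsetP => [H | [f /pffun_onP [/supportP Hs _] ->] j].
    exists [ffun j => z 0 j]; last by apply/rowP => j; rewrite !mxE ffunE.
    apply/pffun_onP; split => //; apply/supportP => j hj.
    by rewrite ffunE; have /implyP := H j; move/(_ hj)/eqP.
  by apply/implyP => hj; rewrite mxE Hs.
by rewrite card_imset // card_pffun_on; congr (_ ^ _)%N; apply: eq_card.
Qed.

Lemma q_gt1 : (1 < q)%N.
Proof. exact: finNzRing_gt1. Qed.

Lemma dim_cs J : \dim (cs J) = #|J|.
Proof.
apply/eqP; rewrite -(eqn_exp2l _ _ q_gt1) -card_cs.
by rewrite (card_vspace (cs J)).
Qed.


Lemma count_enumT (T : finType) (a : pred T) : count a (enum T) = #|a|.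
Proof. by rewrite enumT cardE /enum_mem size_filter. Qed.

Definition pts (Q : pred V) : seq {vspace V} := undup [seq <[z]>%VS | z <- enum V & Q z].

Lemma iterop_add1 n : iterop n addn 1%N 0%N = n.
Proof. by case: n => // n; rewrite iteropS iter_addn; lia. Qed.

Lemma card_line_nz (z0 : V) : z0 != 0 -> #|[pred z | (z \in <[z0]>%VS) && (z != 0)]| = (q - 1)%N.
Proof.
move=> nz; have := card_vspace <[z0]>%VS; rewrite dim_vline nz expn1 (cardD1 0) mem0v.
move=> <-; rewrite add1n subSS subn0; apply: eq_card => z; rewrite !inE andbC.
by [].
Qed.

Lemma size_pts (Q : pred V) :
  (forall z, Q z -> z != 0) ->
  (forall z y, Q z -> y \in <[z]>%VS -> y != 0 -> Q y) ->
  (size (pts Q) * (q - 1) = #|Q|)%N.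
Proof.
move=> H0 Hc; set s := [seq z <- enum V | Q z].
have Hs : size s = #|Q| by rewrite size_filter count_enumT.
have E : size [seq <[z]>%VS | z <- s] = \sum_(P <- pts Q) count_mem P [seq <[z]>%VS | z <- s].
  by rewrite -sum1_size -big_undup_iterop_count; apply: eq_bigr => P _; rewrite iterop_add1.
rewrite -Hs -(size_map (fun z => <[z]>%VS)) E.
rewrite [RHS](_ : _ = \sum_(P <- pts Q) (q - 1)%N).
  by rewrite big_const_seq count_predT iter_addn_0 mulnC.
rewrite big_seq_cond [RHS]big_seq_cond; apply: eq_bigr => P /andP [HP _].
move: HP; rewrite mem_undup => /mapP [z0]; rewrite mem_filter => /andP [Qz0 _] ->.
rewrite count_map count_filter count_enumT -(card_line_nz z0 (H0 z0 Qz0)).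
apply: eq_card => z; rewrite !inE /=.
apply/idP/idP.
  move=> /andP [/eqP Heq Qz]; rewrite H0 // andbT -Heq; exact: memv_line.
move=> /andP [zin znz]; rewrite (Hc z0 z) // andbT.
have le : (<[z]> <= <[z0]>)%VS by rewrite -memvE.
have := dimv_leqif_eq le; rewrite !dim_vline znz H0 //= => -[_ <-]; by [].
Qed.


Lemma card_cap_pts (Q : pred V) H :
  card_cap (pts Q) H = size (pts [pred z | Q z && (z \in H)]).
Proof.
rewrite /card_cap /pts -size_filter filter_undup filter_map -filter_predI.
congr (size (undup (map _ _))); apply: eq_filter => z; rewrite /= memvE andbC.
by [].
Qed.

Lemma pts_point_set (Q : pred V) : (forall z, Q z -> z != 0) -> point_set (pts Q).
Proof.
move=> H0; split; first exact: undup_uniq.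
apply/allP => P; rewrite mem_undup => /mapP [z]; rewrite mem_filter => /andP [Qz _] ->.
by rewrite /is_point dim_vline H0.
Qed.

Lemma dimV : \dim (fullv : {vspace V}) = v.
Proof. rewrite dimvf /=; have := dim_matrix F 1 v. move=> ->; exact: mul1r. Qed.

Lemma dim_capH (U H : {vspace V}) : \dim H = v.-1 ->
  [/\ (\dim U <= (\dim (U :&: H)).+1)%N, (\dim (U :&: H) <= \dim U)%N &
      (\dim (U :&: H) = \dim U -> (U <= H)%VS)].
Proof.
move=> dH; have := dimv_sum_cap U H; have := dimvS (subvf (U + H)%VS); rewrite dimV.
have := dimvS (capvSl U H) => le1 le2 E; split => //.
  lia.
move=> E2; have := dimv_leqif_eq (capvSl U H); rewrite E2 => -[_].
rewrite eqxx => /esym/eqP <-; exact: capvSr.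
Qed.

Lemma cardID_v (A B : {vspace V}) : (B <= A)%VS ->
  #|[pred z | (z \in A) && (z \notin B)]| = (#|A| - #|B|)%N.
Proof.
move=> BA; rewrite -(cardID B A).
have -> : #|[predI A & B]| = #|B|.
  apply: eq_card => z; rewrite !inE; apply/andP/idP => [[]//|zB]; split => //.
  exact: (subvP BA).
by rewrite addKn; apply: eq_card => z; rewrite !inE andbC.
Qed.

Section Blocks.
Variables (m : nat) (JA JB : 'I_m -> {set 'I_v}).
Hypothesis hsub : forall i, JB i \subset JA i.
Hypothesis hdisj : forall i i' j, j \in JA i -> j \in JA i' -> i = i'.

Definition Qb : pred V :=
  fun z => [exists i, (z \in cs (JA i)) && (z \notin cs (JB i))].

Lemma Qb_nz z : Qb z -> z != 0.
Proof.
move=> /existsP [i /andP [_ H]]; apply: contra H => /eqP ->; exact: mem0v.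
Qed.

Lemma Qb_cone z y : Qb z -> y \in <[z]>%VS -> y != 0 -> Qb y.
Proof.
move=> /existsP [i /andP [h1 h2]] /vlineP [k ->] ynz.
have k0 : k != 0 by apply: contra ynz => /eqP ->; rewrite scale0r.
apply/existsP; exists i; rewrite !rpredZeq (negbTE k0) /=; by rewrite h1 h2.
Qed.

Lemma cs_sub (J1 J2 : {set 'I_v}) : J1 \subset J2 -> (cs J1 <= cs J2)%VS.
Proof.
move=> S; apply/subvP => z; rewrite !mem_cs => /forallP H; apply/forallP => j.
apply/implyP => hj; have /implyP := H j; apply; apply: contra hj; exact: (subsetP S).
Qed.

Lemma E_uniq i i' z : z \in cs (JA i) -> z \notin cs (JB i) ->
  z \in cs (JA i') -> z \notin cs (JB i') -> i = i'.
Proof.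
move=> a1 b1 a2 _.
have nz : z != 0 by apply: contra b1 => /eqP ->; exact: mem0v.
have [j zj] : exists j, z 0 j != 0.
  case: (boolP [exists j, z 0 j != 0]) => [/existsP//|/existsPn H].
  case/eqP: nz; apply/rowP => j; rewrite mxE; exact/eqP/negbNE/H.
move: a1 a2; rewrite !mem_cs => /forallP /(_ j) h1 /forallP /(_ j) h2.
apply: (hdisj _ _ j).
  by apply: contraR zj => hj; have := implyP h1 hj.
by apply: contraR zj => hj; have := implyP h2 hj.
Qed.

Lemma card_QbH (H : {vspace V}) :
  #|[pred z | Qb z && (z \in H)]| =
  (\sum_(i < m) (q ^ \dim (cs (JA i) :&: H) - q ^ \dim (cs (JB i) :&: H)))%N.
Proof.
pose E i := [pred z | (z \in (cs (JA i) :&: H)%VS) && (z \notin (cs (JB i) :&: H)%VS)].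
have -> : (\sum_(i < m) (q ^ \dim (cs (JA i) :&: H) - q ^ \dim (cs (JB i) :&: H)))%N
    = (\sum_(i < m) #|E i|)%N.
  apply: eq_bigr => i _; rewrite cardID_v; last by apply: capvS => //; exact: cs_sub.
  by rewrite !card_vspace.
rewrite -sum1_card big_mkcond /=.
under [RHS]eq_bigr do rewrite -sum1_card big_mkcond /=.
rewrite exchange_big /=; apply: eq_bigr => z _.
rewrite inE /=.
case: (boolP (Qb z && (z \in H))) => [/andP [/existsP [i0 /andP [a0 b0]] zH] | N].
  rewrite (bigD1 i0) /=; last by [].
  rewrite inE !memv_cap a0 zH /= andbT b0 big1 ?addn0 //.
  move=> i ne; rewrite inE !memv_cap zH !andbT.
  case: (boolP ((z \in cs (JA i)) && (z \notin cs (JB i)))) => // /andP [a b].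
  by rewrite (E_uniq _ _ _ a0 b0 a b) eqxx in ne.
rewrite big1 // => i _; rewrite inE !memv_cap.
case: (boolP (z \in H)) => zH; last by rewrite !andbF.
rewrite !andbT; case: (boolP ((z \in cs (JA i)) && (z \notin cs (JB i)))) => // /andP [a b].
by move: N; rewrite zH andbT; case/negP; apply/existsP; exists i; rewrite a b.
Qed.

End Blocks.


Definition gs n := (\sum_(i < n) q ^ i)%N.

Lemma geomE n : (q ^ n - 1 = gs n * (q - 1))%N.
Proof.
elim: n => [|n IH]; first by rewrite /gs big_ord0.
rewrite /gs big_ord_recr /= mulnDl -/(gs n) -IH mulnBr muln1 expnS.
have h1 : (1 <= q ^ n)%N by rewrite expn_gt0 ltnW // q_gt1.
have h2 : (q ^ n <= q * q ^ n)%N by rewrite leq_pmull // ltnW // q_gt1.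
rewrite [(q ^ n * q)%N]mulnC; move: h1 h2; set Q := (q ^ n)%N; set P := (q * Q)%N; lia.
Qed.

Lemma card_ivl lo k : (lo + k <= v)%N -> #|[set j : 'I_v | (lo <= j < lo + k)%N]| = k.
Proof.
move=> hk.
have H (t : 'I_k) : (lo + t < v)%N by apply: leq_trans hk; rewrite ltn_add2l.
pose f t := Ordinal (H t).
have finj : injective f by move=> t1 t2 /(congr1 val) /= /addnI /val_inj.
rewrite -[RHS]card_ord -(card_imset _ finj); apply: eq_card => j.
rewrite inE; apply/idP/imsetP => [/andP [h1 h2] | [t _ ->] /=].
  have ht : (j - lo < k)%N by lia.
  by exists (Ordinal ht) => //; apply: val_inj => /=; lia.
by rewrite leq_addr /= ltn_add2l.
Qed.

Section Concrete.
Variables (r x y : nat).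
Local Notation w := r.+2.
Local Notation m := (x + y)%N.
Hypothesis hv : (m * w <= v)%N.

Definition ivl (lo k : nat) : {set 'I_v} := [set j : 'I_v | (lo <= j < lo + k)%N].
Definition JA (i : 'I_m) := ivl (i * w) (if (i < x)%N then r.+1 else r.+2).
Definition JB (i : 'I_m) := if (x <= i)%N then ivl (i * w) r.+1 else set0.

Lemma blk_le (i : 'I_m) : (i * w + w <= v)%N.
Proof.
apply: leq_trans hv; rewrite addnC -mulSn leq_mul2r; by rewrite ltn_ord orbT.
Qed.

Lemma dim_JA i : \dim (cs (JA i)) = if (i < x)%N then r.+1 else r.+2.
Proof.
rewrite dim_cs /JA card_ivl //; apply: leq_trans (blk_le i); rewrite leq_add2l.
by case: ifP.
Qed.

Lemma dim_JB i : \dim (cs (JB i)) = if (x <= i)%N then r.+1 else 0%N.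
Proof.
rewrite dim_cs /JB; case: ifP => _; last by rewrite cards0.
by rewrite card_ivl //; apply: leq_trans (blk_le i); rewrite leq_add2l.
Qed.

Lemma hsubJ i : JB i \subset JA i.
Proof.
rewrite /JB /JA; case: ifP => h; last exact: sub0set.
have -> : (i < x)%N = false by apply/negbTE; rewrite -leqNgt.
by apply/subsetP => j; rewrite !inE => /andP [h1 h2]; rewrite h1 /=; lia.
Qed.

Lemma hdisjJ i i' j : j \in JA i -> j \in JA i' -> i = i'.
Proof.
rewrite /JA /ivl !inE => /andP [a1 a2] /andP [b1 b2].
have c1 : (j < i * w + w)%N by move: a2; case: ifP => _; lia.
have c2 : (j < i' * w + w)%N by move: b2; case: ifP => _; lia.
case: (ltngtP i i') => [lt|lt|/val_inj //].
  have : (i.+1 * w <= i' * w)%N by rewrite leq_mul2r lt orbT.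
  rewrite mulSn; lia.
have : (i'.+1 * w <= i * w)%N by rewrite leq_mul2r lt orbT.
rewrite mulSn; lia.
Qed.

Definition Cset := pts (Qb _ JA JB).


Definition tH (H : {vspace V}) (i : 'I_m) :=
  (q ^ \dim (cs (JA i) :&: H) - q ^ \dim (cs (JB i) :&: H))%N.
Definition cc (i : 'I_m) := if (i < x)%N then (q ^ r - 1)%N else 0%N.
Definition Mq := ((q - 1) * q ^ r)%N.

Lemma term_hyp H i : \dim H = v.-1 -> ((cc i <= tH H i) && (Mq %| tH H i - cc i))%N.
Proof.
move=> dH.
have [A1 A2 A3] := dim_capH (cs (JA i)) H dH.
have [B1 B2 B3] := dim_capH (cs (JB i)) H dH.
have BA : (\dim (cs (JB i) :&: H) <= \dim (cs (JA i) :&: H))%N.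
  by apply: dimvS; apply: capvS => //; exact: cs_sub (hsubJ i).
rewrite dim_JA in A1 A2 A3; rewrite dim_JB in B1 B2 B3.
rewrite /tH /cc /Mq.
have Q1 : (1 <= q ^ r)%N by rewrite expn_gt0 ltnW // q_gt1.
have Q2 : (q ^ r <= q * q ^ r)%N by rewrite leq_pmull // ltnW // q_gt1.
have Q3 : (q * q ^ r <= q * (q * q ^ r))%N by rewrite leq_pmull // ltnW // q_gt1.
have EM : ((q - 1) * q ^ r = q * q ^ r - q ^ r)%N by rewrite mulnBl mul1n.
have EM2 : (q * ((q - 1) * q ^ r) = q * (q * q ^ r) - q * q ^ r)%N by rewrite EM mulnBr.
move: BA A1 A2 A3 B1 B2 B3 EM EM2.
set a := \dim (cs (JA i) :&: H); set b := \dim (cs (JB i) :&: H).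
case: (ltnP i x) => hix.
  move=> BA A1 A2 _ _ B2 _ EM _.
  have -> : b = 0%N by lia.
  have [->|->] : a = r \/ a = r.+1 by lia.
    by rewrite subnn dvdn0 expn0 leqnn.
  rewrite expnS expn0 EM; move: Q1 Q2 EM; set Q := (q ^ r)%N; set P := (q * Q)%N => Q1 Q2 EM.
  have -> : (P - 1 - (Q - 1) = P - Q)%N by lia.
  by rewrite dvdnn andbT; lia.
have hx' : (i < x)%N = false by rewrite ltnNge hix.
move=> BA A1 A2 A3 B1 B2 _ EM EM2.
rewrite subn0 leq0n /=.
have [ea|ea] : a = r.+1 \/ a = r.+2 by lia.
  rewrite ea; have [->|->] : b = r \/ b = r.+1 by lia.
    by rewrite expnS -EM dvdnn.
  by rewrite subnn dvdn0.
have hb : b = r.+1.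
  have AH := A3 ea.
  have BH : (cs (JB i) <= H)%VS by apply: subv_trans AH; exact: cs_sub (hsubJ i).
  by rewrite /b (capv_idPl BH) dim_JB hix.
rewrite ea hb !expnS. move: EM2. move=> <-. exact: dvdn_mull.
Qed.

Lemma lsh_lt (i : 'I_x) : (lshift y i < x)%N. Proof. by rewrite /= ltn_ord. Qed.
Lemma lsh_le (i : 'I_x) : (x <= lshift y i)%N = false. Proof. by rewrite /= leqNgt ltn_ord. Qed.
Lemma rsh_lt (i : 'I_y) : (rshift x i < x)%N = false. Proof. by rewrite /= ltnNge leq_addr. Qed.
Lemma rsh_le (i : 'I_y) : (x <= rshift x i)%N. Proof. by rewrite /= leq_addr. Qed.

Lemma card_Qb_full :
  #|Qb _ JA JB| = (x * (q ^ r.+1 - 1) + y * (q ^ r.+2 - q ^ r.+1))%N.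
Proof.
have -> : #|Qb _ JA JB| = #|[pred z | Qb _ JA JB z && (z \in fullv)]|.
  by apply: eq_card => z; rewrite inE memvf andbT.
rewrite (@card_QbH _ JA JB hsubJ hdisjJ fullv) big_split_ord /=.
congr (_ + _)%N.
  rewrite -[x in (x * _)%N]card_ord -sum_nat_const; apply: eq_bigr => i _.
  by rewrite !capvf dim_JA dim_JB lsh_lt lsh_le expn0.
rewrite -[y in (y * _)%N]card_ord -sum_nat_const; apply: eq_bigr => i _.
by rewrite !capvf dim_JA dim_JB rsh_lt rsh_le.
Qed.

Lemma q1_gt0 : (0 < q - 1)%N. Proof. by rewrite subn_gt0 q_gt1. Qed.

Lemma Cset_size : size Cset = (x * gs r.+1 + y * q ^ r.+1)%N.
Proof.
have E1 := size_pts _ (@Qb_nz _ JA JB) (@Qb_cone _ JA JB).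
apply/eqP; rewrite -(eqn_pmul2r q1_gt0); apply/eqP; rewrite /Cset E1 card_Qb_full.
rewrite geomE mulnDl !mulnA; congr (_ + _)%N.
rewrite -mulnA; congr (y * _)%N; rewrite mulnBr muln1 [(q ^ r.+2)%N]expnS; congr (_ - _)%N; exact: mulnC.
Qed.

Lemma Cset_ps : point_set Cset.
Proof. exact: pts_point_set _ (@Qb_nz _ JA JB). Qed.

Lemma Cset_div : divisible (q ^ r) Cset.
Proof.
exists (x * gs r)%N%:Z => H /eqP dH.
rewrite /Cset card_cap_pts.
set Qh := [pred z | Qb _ JA JB z && (z \in H)].
have nz z : Qh z -> z != 0 by move=> /andP [h _]; exact: Qb_nz h.
have cone z y0 : Qh z -> y0 \in <[z]>%VS -> y0 != 0 -> Qh y0.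
  move=> /andP [h zH] yz ynz; apply/andP; split; first exact: Qb_cone h yz ynz.
  by move/vlineP: yz => [k ->]; rewrite memvZ.
have E1 := size_pts _ nz cone.
rewrite (@card_QbH _ JA JB hsubJ hdisjJ H) in E1.
have E2 : (\sum_(i < m) (q ^ \dim (cs (JA i) :&: H) - q ^ \dim (cs (JB i) :&: H)))%N
   = (\sum_(i < m) cc i + \sum_(i < m) (tH H i - cc i))%N.
  rewrite -big_split /=; apply: eq_bigr => i _.
  by have /andP [h _] := term_hyp H i dH; rewrite subnKC.
have D : (Mq %| \sum_(i < m) (tH H i - cc i))%N.
  by apply: dvdn_sum => i _; have /andP [_ h] := term_hyp H i dH.
have Ec : (\sum_(i < m) cc i = x * (q ^ r - 1))%N.
  rewrite big_split_ord /= [X in (_ + X)%N]big1 ?addn0; last by move=> i _; rewrite /cc rsh_lt.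
  rewrite -[x in (x * _)%N]card_ord -sum_nat_const; apply: eq_bigr => i _.
  by rewrite /cc lsh_lt.
move: D E1; rewrite E2 Ec; case/dvdnP => K ->; rewrite /Mq geomE => E1.
have E3 : (size (pts Qh) * (q - 1) = (x * gs r + K * q ^ r) * (q - 1))%N.
  rewrite E1 mulnDl; congr (_ + _)%N; first by rewrite mulnA.
  by rewrite -mulnA [(q ^ r * (q - 1))%N]mulnC.
move/eqP: E3; rewrite eqn_pmul2r ?q1_gt0 // => /eqP E3.
rewrite E3 !modz_nat; congr Posz.
by rewrite addnC modnMDl.
Qed.
End Concrete.


Lemma sub_eq_dim (P Q : {vspace V}) : (P <= Q)%VS -> \dim P = \dim Q -> P = Q.
Proof. by move=> PQ dPQ; have [_] := dimv_leqif_eq PQ; rewrite dPQ eqxx => /esym/eqP. Qed.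

Lemma line_eq (P : {vspace V}) : \dim P = 1%N -> P = <[vpick P]>%VS /\ vpick P != 0.
Proof.
move=> dP; have nz : vpick P != 0.
  by rewrite vpick0; apply/eqP => P0; move: dP; rewrite P0 dimv0.
split => //; apply/esym/sub_eq_dim; first by rewrite -memvE memv_pick.
by rewrite dim_vline nz dP.
Qed.

Lemma hyp_exists (U : {vspace V}) (z : V) : z \notin U ->
  exists H : {vspace V}, [/\ \dim H = v.-1, (U <= H)%VS & z \notin H].
Proof.
move=> zU; set W := (U + <[z]>)%VS.
have znz : z != 0 by apply: contraNneq zU => ->; exact: mem0v.
have d0 : \dim (U :&: <[z]>) = 0%N.
  have le1 : (\dim (U :&: <[z]>) <= 1)%N.
    by have := dimvS (capvSr U <[z]>); rewrite dim_vline znz.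
  case: (posnP (\dim (U :&: <[z]>))) => // pos.
  have E : (U :&: <[z]>)%VS = <[z]>%VS.
    by apply: sub_eq_dim; [exact: capvSr | rewrite dim_vline znz; lia].
  case/negP: zU; rewrite memvE -E; exact: capvSl.
have dW := dimv_sum_cap U <[z]>; rewrite d0 addn0 -/W in dW.
have dWle : (\dim W <= v)%N by rewrite -[X in (_ <= X)%N]dimV; apply: dimvS; exact: subvf.
have dWc := dimv_compl W; rewrite dimV in dWc.
have c0 : (U :&: W^C)%VS = 0%VS.
  apply/eqP; rewrite -subv0 -(capv_compl W); apply: capvS => //; exact: addvSl.
exists (U + W^C)%VS; split.
- have := dimv_sum_cap U W^C; rewrite c0 dimv0 addn0 dWc.
  rewrite dim_vline znz in dW; lia.
- exact: addvSl.
- apply/negP => /memv_addP [u uU [c cW E]].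
  have cW' : c \in W.
    have -> : c = z - u by rewrite E addrC addKr.
    by rewrite rpredB // ?memv_add // ?mem0v ?addr0 ?memv_line //;
       [ rewrite -[z]add0r memv_add ?mem0v ?memv_line | rewrite -[u]addr0 memv_add ?mem0v ].
  have : c \in (W :&: W^C)%VS by rewrite memv_cap cW' cW.
  rewrite capv_compl memv0 => /eqP c0'.
  by case/negP: zU; rewrite E c0' addr0.
Qed.

Lemma not_two (k : nat) : (1 < k)%N ->
  ~ (exists C : seq {vspace V}, point_set C /\ size C = 2%N /\ divisible k C).
Proof.
move=> k1 [C [[uC allC] [sz [u Hu]]]].
case: C uC allC sz Hu => [|P1 [|P2 [|]]] //= uC allC _ Hu.
move: uC allC; rewrite inE andbT /is_point => P12 /and3P [/eqP d1 /eqP d2 _].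
have [E1 n1] := line_eq _ d1; have [E2 n2] := line_eq _ d2.
move: E1 E2 n1 n2; set z1 := vpick P1; set z2 := vpick P2 => E1 E2 n1 n2.
have z2P1 : z2 \notin P1.
  apply/negP => h; case/negP: P12; apply/eqP/esym/sub_eq_dim; last by rewrite d1 d2.
  by rewrite E2 -memvE.
have [H1 [dH1 sH1 nH1]] := hyp_exists _ _ z2P1.
have z1L : z1 \notin <[z1 + z2]>%VS.
  apply/negP => /vlineP [c Ec].
  have c0 : c != 0 by apply: contra n1 => /eqP c0; rewrite Ec c0 scale0r.
  have h : c *: z2 = (1 - c) *: z1.
    by rewrite scalerBl scale1r {1}Ec scalerDr addrAC subrr add0r.
  have h2 : z2 = (c^-1 * (1 - c)) *: z1 by rewrite -scalerA -h scalerA mulVf // scale1r.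
  by case/negP: z2P1; rewrite E1 h2 memvZ // memv_line.
have [H0 [dH0 sH0 nH0]] := hyp_exists _ _ z1L.
have z2H0 : z2 \notin H0.
  apply/negP => h; case/negP: nH0.
  have -> : z1 = (z1 + z2) - z2 by rewrite addrK.
  by rewrite rpredB // (subvP sH0) // memv_line.
have c1 : card_cap [:: P1; P2] H1 = 1%N.
  by rewrite /card_cap /= sH1 E2 -memvE (negbTE nH1).
have c0 : card_cap [:: P1; P2] H0 = 0%N.
  by rewrite /card_cap /= E1 E2 -!memvE (negbTE nH0) (negbTE z2H0).
have := Hu H1; have := Hu H0; rewrite /is_hyperplane dH1 dH0 eqxx; move: c1 c0; rewrite /card_cap /= => -> ->.
move=> /(_ isT) h0 /(_ isT) h1; move: h1; rewrite -h0 !modz_nat => -[].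
by rewrite mod0n modn_small.
Qed.
End Gen.
Lemma sylvester (a b n : nat) : (0 < a)%N -> (0 < b)%N -> coprime a b ->
  (a * b < n + a + b)%N -> exists x y, n = (x * a + y * b)%N.
Proof.
move=> a0 b0 cop lt.
have [u [w E]] := Bezoutz a b.
have g1 : gcdz a b = 1 by rewrite /gcdz /= (eqP cop).
rewrite g1 in E.
set x0 := ((n%:Z * u) %% b)%Z.
set k := ((n%:Z * u) %/ b)%Z.
have Hd : n%:Z * u = k * b + x0 by rewrite /k /x0 -divz_eq.
have bnz : b%:Z != 0 by rewrite eqz_nat -lt0n.
have x0ge : 0 <= x0 by rewrite /x0 modz_ge0.
have x0lt : x0 < b by rewrite /x0 ltz_pmod // ltz_nat.
set yv := n%:Z * w + k * a.
have Hn : x0 * a + yv * b = n.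
  have -> : x0 = n%:Z * u - k * b by rewrite Hd; ring.
  rewrite /yv -[RHS]mulr1 -E; ring.
have yge : 0 <= yv.
  have lt2 : (a%:Z * b < n%:Z + a + b) by rewrite -!PoszM -!PoszD ltz_nat.
  have h1 : x0 * a <= (b%:Z - 1) * a.
    have : x0 <= b%:Z - 1 by lia.
    by move=> h; apply: ler_wpM2r.
  have h2 : 0 < (yv + 1) * b by rewrite mulrDl mul1r; lia.
  rewrite pmulr_lgt0 ?ltz_nat // in h2; lia.
exists `|x0|%N, `|yv|%N.
apply/eqP; rewrite -eqz_nat PoszD !PoszM !gez0_abs //; exact/eqP.
Qed.

Lemma gs_rec (F : finFieldType) n : gs F n.+1 = (1 + #|F| * gs F n)%N.
Proof.
rewrite /gs big_ord_recl expn0 big_distrr /=; congr (_ + _)%N.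
by apply: eq_bigr => i _; rewrite /bump /= add1n expnS.
Qed.

Theorem lemma2p8 (F : finFieldType) (r : nat) (hr : (1 <= r)%N) :
  let q := #|F| in
  let bound : int :=
    (((q ^ r.+1 - 1) %/ (q - 1)) * q ^ r.+1)%N%:Z
    - ((q ^ r.+1 - 1) %/ (q - 1))%N%:Z - (q ^ r.+1)%N%:Z in
  (exists n : nat, ~ realizable F (q ^ r) n) /\
  (forall n : nat, bound < n%:Z -> realizable F (q ^ r) n).
Proof.
move=> q bound; split.
  exists 2%N => -[v [_ HC]]; apply: (not_two F v (q ^ r)) => //.
  have q2 := q_gt1 F; apply: leq_trans q2 _.
  by rewrite /q -[X in (X <= _)%N]expn1 (leq_pexp2l (ltnW (q_gt1 F))).
move=> n hn.
have ea : ((q ^ r.+1 - 1) %/ (q - 1))%N = gs F r.+1 by rewrite geomE mulnK // q1_gt0.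
rewrite /bound ea in hn.
have ha : (0 < gs F r.+1)%N by rewrite gs_rec.
have hb : (0 < q ^ r.+1)%N by rewrite expn_gt0 ltnW // q_gt1.
have cop : coprime (gs F r.+1) (q ^ r.+1).
  rewrite coprime_pexpr // -coprime_modl gs_rec addnC mulnC modnMDl.
  by rewrite modn_small ?q_gt1 // coprime1n.
have lt : (gs F r.+1 * q ^ r.+1 < n + gs F r.+1 + q ^ r.+1)%N.
  move: hn; set A := gs F r.+1; set B := (q ^ r.+1)%N; set AB := (A * B)%N; lia.
have [x [y En]] := sylvester _ _ _ ha hb cop lt.
exists ((x + y) * r.+2).+1; split => //.
exists (Cset F ((x + y) * r.+2).+1 r x y); split; first exact: Cset_ps.
split; last exact: Cset_div.
by rewrite Cset_size // En.
Qed.
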